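(* Let $G=(V,E)$ be a directed graph, $s\neq t$ vertices, $u\in V$ and $l\ge 1$ an integer. Then there exists a (not necessarily simple) path from $s$ to $u$ of length at most $l$ not containing $t$ if and only if there exists a simple such path, and in that case $EV_l(s,u)=EV^*_l(s,u)$.
   Context: A path from $x$ to $y$ in $G$ is a vertex sequence $x=v_0,\dots,v_m=y$ with $(v_{i-1},v_i)\in E$ (vertices may repeat); its length is $m$ and $V(p)$ is its vertex set. A simple path has no repeated vertex. $EV_l(s,u)$ is the intersection of $V(p)$ over all paths $p$ (not necessarily simple) from $s$ to $u$ of length at most $l$ with $t\notin V(p)$, and it exists iff this family is nonempty. $EV^*_l(s,u)$ is the intersection of $V(p)$ over all simple paths $p$ from $s$ to $u$ of length at most $l$ with $t\notin V(p)$, and it exists iff this family is nonempty. *)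

(* Defs.v *)
From mathcomp Require Import all_boot.
Set Implicit Arguments. Unset Strict Implicit. Unset Printing Implicit Defensive.

(* A path from x to y is encoded by its sequence of successors p : seq T,
   the vertex sequence being x :: p; it is valid iff path e x p and
   last x p = y. Its length is size p and its vertex set V(p) is x :: p. *)

Definition is_walk (T : eqType) (e : rel T) (x y : T) (p : seq T) : Prop :=
  path e x p /\ last x p = y.

Definition adm_walk (T : eqType) (e : rel T) (t s u : T) (l : nat)
  (p : seq T) : Prop :=
  is_walk e s u p /\ size p <= l /\ t \notin (s :: p).

Definition adm_simple (T : eqType) (e : rel T) (t s u : T) (l : nat)
  (p : seq T) : Prop :=
  adm_walk e t s u l p /\ uniq (s :: p).

Definition EV (T : eqType) (e : rel T) (t s u : T) (l : nat) (v : T) : Prop :=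
  forall p, adm_walk e t s u l p -> v \in s :: p.

Definition EVstar (T : eqType) (e : rel T) (t s u : T) (l : nat) (v : T) : Prop :=
  forall p, adm_simple e t s u l p -> v \in s :: p.

(* Main.v *)
Require Import Defs.
From mathcomp Require Import all_boot.

Lemma shorten_adm (T : finType) (e : rel T) (s t u : T) (l : nat) p :
  adm_walk e t s u l p ->
  exists q, adm_simple e t s u l q /\ {subset (s :: q) <= (s :: p)}.
Proof.
move=> [[pth lst] [sz tn]].
case: (shortenP pth) lst => q pq uq sub lst.
have sub' : {subset (s :: q) <= (s :: p)}.
  by move=> z; rewrite !inE => /orP[->//|/sub ->]; rewrite orbT.
exists q; split=> //; split=> //; split; first by split.
split.
  apply: leq_trans sz; apply: uniq_leq_size => //.
  by move: uq => /= /andP[].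
by apply/negP => /sub' H; move: tn; rewrite H.
Qed.

Theorem theorem3p5 (T : finType) (e : rel T) (s t u : T) (l : nat) :
  s != t -> 1 <= l ->
  ((exists p, adm_walk e t s u l p) <-> (exists p, adm_simple e t s u l p)) /\
  ((exists p, adm_walk e t s u l p) ->
     forall v, EV e t s u l v <-> EVstar e t s u l v).
Proof.
move=> _ _; split.
  split; last by move=> [p [H _]]; exists p.
  by move=> [p /shorten_adm [q [H _]]]; exists q.
move=> _ v; split.
  by move=> H p [Hp _]; apply: H.
move=> H p /shorten_adm [q [Hq sub]].
by apply: sub; apply: H.
Qed.
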